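(* In any tree $T=(V,E)$, the quantity $$\Lambda_1=\sum_{\{st,uv\}\in Q}\big(a_{su}(k_t+k_v)+a_{sv}(k_t+k_u)+a_{tu}(k_s+k_v)+a_{tv}(k_s+k_u)\big)$$ satisfies $$\Lambda_1=\sum_{st\in E}\Big((k_t-1)(\xi(s)-k_t)+(k_s-1)(\xi(t)-k_s)\Big).$$
   Context: $a_{ij}$ adjacency entries, $k_x$ degree, $\xi(s)=\sum_{t\in\Gamma(s)}k_t$ with $\Gamma(s)$ the neighbourhood of $s$. $Q$ is the set of unordered pairs $\{st,uv\}$ of edges with $s,t,u,v$ pairwise distinct. *)

(* Defs.v *)
From mathcomp Require Import all_boot all_order all_algebra.
Set Implicit Arguments. Unset Strict Implicit. Unset Printing Implicit Defensive.
Import Order.TTheory GRing.Theory Num.Theory.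

Definition simple_graph (T : finType) (e : rel T) : Prop :=
  symmetric e /\ irreflexive e.

Definition connected_graph (T : finType) (e : rel T) : Prop :=
  forall x y : T, connect e x y.

Definition has_cycle (T : finType) (e : rel T) : Prop :=
  exists (x : T) (p : seq T),
    [/\ 2 <= size p, uniq (x :: p), path e x p & e (last x p) x].

Definition is_tree (T : finType) (e : rel T) : Prop :=
  [/\ simple_graph e, 0 < #|T|, connected_graph e & ~ has_cycle e].

Definition edges (T : finType) (e : rel T) : {set {set T}} :=
  [set [set x; y] | x in T, y in T & e x y].

(* Q: unordered pairs {st, uv} of edges with s,t,u,v pairwise distinct,
   i.e. pairs of vertex-disjoint edges *)
Definition Qpairs (T : finType) (e : rel T) : {set {set {set T}}} :=
  [set [set A; B] | A in edges e, B in edges e & [disjoint A & B]].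

Local Open Scope ring_scope.

Definition adj (T : finType) (e : rel T) (x y : T) : int := (e x y : nat)%:Z.

Definition deg (T : finType) (e : rel T) (x : T) : int := #|[set y | e x y]|%:Z.

Definition xi (T : finType) (e : rel T) (s : T) : int :=
  \sum_(t | e s t) deg e t.

(* For edges A = {s,t}, B = {u,v}: the summand
   a_su(k_t+k_v) + a_sv(k_t+k_u) + a_tu(k_s+k_v) + a_tv(k_s+k_u),
   written as a sum over the choice x in A, y in B, where the "other"
   endpoint of A (resp. B) is the unique element of A :\ x (resp. B :\ y). *)
Definition Lsummand (T : finType) (e : rel T) (A B : {set T}) : int :=
  \sum_(x in A) \sum_(y in B)
     adj e x y * (\sum_(z in A :\ x) deg e z + \sum_(w in B :\ y) deg e w).

(* The summand for q = {A, B} in Q: pick one element A of q, B is the other.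
   (Lsummand is symmetric, so the choice is immaterial.) *)
Definition Qsummand (T : finType) (e : rel T) (q : {set {set T}}) : int :=
  let A := odflt set0 [pick A in q] in
  let B := odflt set0 [pick B in q :\ A] in
  Lsummand e A B.

Definition Lambda1 (T : finType) (e : rel T) : int :=
  \sum_(q in Qpairs e) Qsummand e q.

(* For an edge A = {s,t}: (k_t-1)(xi(s)-k_t) + (k_s-1)(xi(t)-k_s),
   written as the sum over the choice of s in A, t the other endpoint. *)
Definition Rsummand (T : finType) (e : rel T) (A : {set T}) : int :=
  \sum_(s in A) \sum_(t in A :\ s) ((deg e t - 1) * (xi e s - deg e t)).

(* Main.v *)
Require Import Defs.
From mathcomp Require Import all_boot all_order all_algebra.
From mathcomp Require Import ring.
Import Order.TTheory GRing.Theory Num.Theory.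
Local Open Scope ring_scope.

Lemma sum_ind (I : finType) (P : pred I) (F : I -> int) :
  \sum_i (P i : nat)%:Z * F i = \sum_(i | P i) F i.
Proof.
rewrite [RHS]big_mkcond; apply: eq_bigr => i _; case: (P i) => /=.
  by rewrite mul1r. by rewrite mul0r.
Qed.

Lemma natZ_and (a b : bool) : ((a && b) : nat)%:Z = (a : nat)%:Z * (b : nat)%:Z.
Proof. by case: a; case: b. Qed.

Lemma set2_inv (X : finType) (a b c d : X) : a != b ->
  [set c; d] = [set a; b] -> (c == a) && (d == b) || (c == b) && (d == a).
Proof.
move=> ab /setP H.
have Hc := H c; have Ha := H a; have Hb := H b.
rewrite !in_set2 !eqxx /= ?orbT in Hc Ha Hb.
move: Hc => /esym/orP [/eqP Ec|/eqP Ec]; subst c.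
  move: Hb; rewrite eq_sym (negbTE ab) /= eq_sym => ->; by rewrite eqxx.
by move: Ha; rewrite (negbTE ab) /= eq_sym => ->; rewrite eqxx orbT.
Qed.

Lemma sum_upairs (X : finType) (R : rel X) (Q : {set {set X}}) (F : {set X} -> int) :
  symmetric R -> irreflexive R ->
  (forall q, q \in Q <-> exists a b, R a b /\ q = [set a; b]) ->
  (\sum_(q in Q) F q) *+ 2 = \sum_a \sum_b (R a b : nat)%:Z * F [set a; b].
Proof.
move=> Rs Ri HQ.
rewrite (eq_bigr (fun a => \sum_(b | R a b) F [set a; b])); last first.
  by move=> a _; rewrite sum_ind.
rewrite pair_big_dep /=.
rewrite (partition_big (fun p : X * X => [set p.1; p.2]) (mem Q)) /=; last first.
  by move=> [a b] /= Rab; apply/HQ; exists a, b.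
rewrite -sumrMnl; apply: eq_bigr => q Hq.
have [a [b [Rab ->]]] := (iffLR (HQ q)) Hq.
have ab : a != b by apply/eqP => E; move: Rab; rewrite E Ri.
rewrite (eq_bigr (fun _ => F [set a; b])); last by move=> i /andP [_ /eqP ->].
rewrite (eq_bigl (mem [set (a, b); (b, a)])); last first.
  move=> [c d] /=; rewrite !inE.
  apply/idP/idP.
    move=> /andP [Rcd /eqP E]; have := @set2_inv _ _ _ _ _ ab E.
    by rewrite !xpair_eqE.
  rewrite !xpair_eqE => /orP [] /andP [/eqP -> /eqP ->]; first by rewrite Rab eqxx.
  by rewrite Rs Rab /= setUC eqxx.
rewrite sumr_const cards2.
suff -> : (a, b) != (b, a) by [].
by rewrite xpair_eqE negb_and ab.
Qed.

Set Implicit Arguments. Unset Strict Implicit.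

Lemma edgesP (T : finType) (e : rel T) q :
  q \in edges e <-> exists a b, e a b /\ q = [set a; b].
Proof.
split.
  by case/imset2P => a b _; rewrite inE => Hab ->; exists a, b.
by move=> [a [b [Hab ->]]]; apply/imset2P; apply: (Imset2spec (x1:=a) (x2:=b)); rewrite ?inE.
Qed.

Definition RQ (T : finType) (e : rel T) (A B : {set T}) :=
  [&& A \in edges e, B \in edges e & [disjoint A & B]].

Lemma QpairsP (T : finType) (e : rel T) q :
  q \in Qpairs e <-> exists A B, RQ e A B /\ q = [set A; B].
Proof.
split.
  by case/imset2P => a b Ha; rewrite inE => /andP [Hb Hd] ->; exists a, b; rewrite /RQ Ha Hb Hd.
move=> [a [b [/and3P [Ha Hb Hd] ->]]]; apply/imset2P.
by apply: (Imset2spec (x1:=a) (x2:=b)); rewrite ?inE ?Ha ?Hb ?Hd.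
Qed.

Lemma adj_sym (T : finType) (e : rel T) : symmetric e -> forall x y, adj e x y = adj e y x.
Proof. by move=> es x y; rewrite /adj es. Qed.

Lemma Lsym (T : finType) (e : rel T) A B : symmetric e -> Lsummand e A B = Lsummand e B A.
Proof.
move=> es; rewrite /Lsummand exchange_big; apply: eq_bigr => y _; apply: eq_bigr => x _.
by rewrite adj_sym // addrC.
Qed.

Lemma Qsum2 (T : finType) (e : rel T) A B : symmetric e -> A != B ->
  Qsummand e [set A; B] = Lsummand e A B.
Proof.
move=> es AB; rewrite /Qsummand.
case: pickP => [A0 HA0|H]; last by have := H A; rewrite !inE eqxx.
have other : forall C, C \in [set A; B] -> C != A0 -> C = (if A0 == A then B else A).
  move=> C; move: HA0; rewrite !inE => /orP [] /eqP -> /orP [] /eqP -> //; rewrite ?eqxx //.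
  by move=> _; rewrite eq_sym (negbTE AB).
rewrite /=; case: pickP => [B0 HB0|H]; last first.
  move: HA0; rewrite !inE => /orP [] /eqP E.
    by have := H B; rewrite !inE eqxx orbT E eq_sym AB.
  by have := H A; rewrite !inE eqxx E AB.
move: HB0; rewrite in_setD1 => /andP [nB HB].
rewrite (other _ HB nB) /=.
move: HA0; rewrite !inE => /orP [] /eqP ->; rewrite ?eqxx //.
by rewrite eq_sym (negbTE AB) Lsym.
Qed.

Section S4.
Lemma swap12 (T : finType) (F : T -> T -> T -> T -> int) :
  \sum_a \sum_b \sum_c \sum_d F a b c d = \sum_a \sum_b \sum_c \sum_d F b a c d.
Proof. by rewrite exchange_big. Qed.

Lemma swap34 (T : finType) (F : T -> T -> T -> T -> int) :
  \sum_a \sum_b \sum_c \sum_d F a b c d = \sum_a \sum_b \sum_c \sum_d F a b d c.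
Proof. apply: eq_bigr => a _; apply: eq_bigr => b _; by rewrite exchange_big. Qed.

Lemma swapP (T : finType) (F : T -> T -> T -> T -> int) :
  \sum_a \sum_b \sum_c \sum_d F a b c d = \sum_a \sum_b \sum_c \sum_d F c d a b.
Proof.
transitivity (\sum_a \sum_c \sum_b \sum_d F a b c d).
  by apply: eq_bigr => a _; rewrite exchange_big.
rewrite exchange_big; apply: eq_bigr => c _.
transitivity (\sum_a \sum_d \sum_b F a b c d).
  by apply: eq_bigr => a _; rewrite exchange_big.
by rewrite exchange_big.
Qed.

Lemma rot234 (T : finType) (F : T -> T -> T -> T -> int) :
  \sum_a \sum_b \sum_c \sum_d F a b c d = \sum_a \sum_b \sum_c \sum_d F a d b c.
Proof.
apply: eq_bigr => a _.
transitivity (\sum_b \sum_d \sum_c F a d b c); last first.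
  by apply: eq_bigr => b _; rewrite exchange_big.
by rewrite [RHS]exchange_big.
Qed.
End S4.

Lemma disj2 (T : finType) (a b c d : T) :
  [disjoint [set a; b] & [set c; d]] = [&& a != c, a != d, b != c & b != d].
Proof.
apply/idP/idP.
  move=> H; have := disjointFr H (set21 a b); have := disjointFr H (set22 a b).
  rewrite !inE => /negbT; rewrite negb_or => /andP[-> ->] /negbT; rewrite negb_or => /andP [-> ->] //.
move=> /and4P [ac ad bc bd]; apply/pred0P => z /=; rewrite !inE.
apply/negbTE/negP => /andP [/orP [] /eqP -> /orP [] /eqP E]; subst;
  by rewrite ?eqxx in ac ad bc bd.
Qed.

Lemma notri (T : finType) (e : rel T) : is_tree e ->
  forall a b c, e a b -> e b c -> e c a -> False.
Proof.
case=> [[es ei] _ _ nc] a b c ab bc ca; apply: nc; exists a, [:: b; c].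
have nab : a != b by apply/eqP => E; move: ab; rewrite E ei.
have nbc : b != c by apply/eqP => E; move: bc; rewrite E ei.
have nca : c != a by apply/eqP => E; move: ca; rewrite E ei.
split => //=; last by rewrite ab bc.
by rewrite !inE !negb_or nab (eq_sym a c) nca nbc.
Qed.

Definition S4 (T : finType) (F : T -> T -> T -> T -> int) :=
  \sum_a \sum_b \sum_c \sum_d F a b c d.

Lemma S4_ext (T : finType) (F G : T -> T -> T -> T -> int) :
  (forall a b c d, F a b c d = G a b c d) -> S4 F = S4 G.
Proof.
move=> H; apply: eq_bigr => a _; apply: eq_bigr => b _; apply: eq_bigr => c _;
  apply: eq_bigr => d _; exact: H.
Qed.

Lemma S4_add (T : finType) (F G : T -> T -> T -> T -> int) :
  S4 (fun a b c d => F a b c d + G a b c d) = S4 F + S4 G.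
Proof.
rewrite /S4 -big_split; apply: eq_bigr => a _; rewrite -big_split;
apply: eq_bigr => b _; rewrite -big_split; apply: eq_bigr => c _; by rewrite -big_split.
Qed.

Lemma setD2l (T : finType) (x y : T) : x != y -> [set x; y] :\ x = [set y].
Proof.
move=> xy; apply/setP => z; rewrite !inE.
by case: (eqVneq z x) => [->|zx] /=; rewrite ?(negbTE xy).
Qed.

Lemma set2C (T : finType) (x y : T) : [set x; y] = [set y; x].
Proof. exact: setUC. Qed.

Lemma setD2r (T : finType) (x y : T) : x != y -> [set x; y] :\ y = [set x].
Proof. by move=> xy; rewrite set2C setD2l // eq_sym. Qed.

Lemma sum2 (T : finType) (x y : T) (F : T -> int) : x != y ->
  \sum_(i in [set x; y]) F i = F x + F y.
Proof. by move=> xy; rewrite big_setU1 ?big_set1 // inE. Qed.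

Lemma Lexp (T : finType) (e : rel T) x x' y y' : x != x' -> y != y' ->
  Lsummand e [set x; x'] [set y; y'] =
  adj e x y * (deg e x' + deg e y') + adj e x y' * (deg e x' + deg e y)
  + adj e x' y * (deg e x + deg e y') + adj e x' y' * (deg e x + deg e y).
Proof.
move=> xx yy; rewrite /Lsummand !sum2 // setD2l // setD2r // setD2l // setD2r //.
rewrite !big_set1; ring.
Qed.

Definition fR (T : finType) (e : rel T) (s t : T) :=
  (deg e t - 1) * (xi e s - deg e t).

Lemma Rexp (T : finType) (e : rel T) s t : s != t ->
  Rsummand e [set s; t] = fR e s t + fR e t s.
Proof.
by move=> st; rewrite /Rsummand sum2 // setD2l // setD2r // !big_set1.
Qed.

Lemma degsum (T : finType) (e : rel T) x : deg e x = \sum_y adj e x y.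
Proof.
rewrite /deg -sum1_card -natz natr_sum big_mkcond; apply: eq_bigr => y _.
by rewrite inE /adj; case: (e x y).
Qed.

Lemma degm1 (T : finType) (e : rel T) t s : e t s ->
  deg e t - 1 = \sum_t' adj e t t' * ((t' != s) : nat)%:Z.
Proof.
move=> ts; rewrite degsum (bigD1 s) //= [RHS](bigD1 s) //= eqxx /adj ts mulr0 add0r.
rewrite addrAC subrr add0r; apply: eq_bigr => i /negbTE ->; by rewrite mulr1.
Qed.

Lemma xim (T : finType) (e : rel T) s t : e s t ->
  xi e s - deg e t = \sum_u adj e s u * ((u != t) : nat)%:Z * deg e u.
Proof.
move=> st; rewrite /xi -sum_ind (bigD1 t) //= [RHS](bigD1 t) //= eqxx st mulr0 mul0r add0r mul1r.
rewrite addrAC subrr add0r; apply: eq_bigr => i /negbTE ->; by rewrite mulr1.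
Qed.

Lemma sumE2 (T : finType) (e : rel T) (H : {set T} -> int) :
  symmetric e -> irreflexive e ->
  (\sum_(A in edges e) H A) *+ 2 = \sum_x \sum_x' adj e x x' * H [set x; x'].
Proof.
move=> es ei; rewrite (@sum_upairs _ e (edges e) H es ei) //.
move=> q; exact: edgesP.
Qed.

Lemma disjself (T : finType) (e : rel T) A : A \in edges e -> [disjoint A & A] = false.
Proof.
case/edgesP => a [b [_ ->]]; apply/negP => H.
by have := disjointFr H (set21 a b); rewrite set21.
Qed.

Unset Implicit Arguments.

Theorem corollary1 (T : finType) (e : rel T) :
  is_tree e ->
  Lambda1 e = \sum_(A in edges e) Rsummand e A.
Proof.
move=> tr; have [[es ei] _ _ _] := tr.
pose D := fun x x' y y' : T => adj e x x' * adj e y y' *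
   ([disjoint [set x; x'] & [set y; y']] : nat)%:Z.
pose K := fun x x' y y' : T => D x x' y y' * adj e x y * deg e y'.
have Dsym : forall x x' y y', D x x' y y' = D y y' x x'.
  by move=> x x' y y'; rewrite /D disjoint_sym; ring.
have LHS : Lambda1 e = S4 K.
  apply: (@pmulrnI _ 8) => //.
  have step1 : Lambda1 e *+ 2 = \sum_(A in edges e) \sum_(B in edges e)
       ([disjoint A & B] : nat)%:Z * Lsummand e A B.
    rewrite /Lambda1 (@sum_upairs _ (RQ e) (Qpairs e) (Qsummand e)); last first.
    - by move=> q; exact: QpairsP.
    - by move=> A; rewrite /RQ; case HA: (A \in edges e) => //=; rewrite (disjself HA).
    - by move=> A B; rewrite /RQ andbCA disjoint_sym.
    rewrite -[RHS]sum_ind; apply: eq_bigr => A _; rewrite -[in RHS]sum_ind mulr_sumr; apply: eq_bigr => B _.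
    rewrite /RQ; case HA: (A \in edges e); case HB: (B \in edges e);
      case HD: [disjoint A & B]; rewrite /= ?mul0r ?mul1r //.
    rewrite Qsum2 //; apply/eqP => E; move: HD; by rewrite E (disjself HB).
  pose Kf := fun x x' y y' : T => adj e x x' * (adj e y y' *
     (([disjoint [set x; x'] & [set y; y']] : nat)%:Z * Lsummand e [set x; x'] [set y; y'])).
  have step2 : Lambda1 e *+ 8 = S4 Kf.
    have -> : 8%N = (2 * 2 * 2)%N by [].
    rewrite !mulrnA step1 -sumrMnl.
    under eq_bigr => A _ do rewrite sumE2 //.
    rewrite sumE2 //.
    apply: eq_bigr => x _; apply: eq_bigr => x' _; rewrite mulr_sumr; apply: eq_bigr => y _;
      rewrite mulr_sumr; apply: eq_bigr => y' _; by [].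
  pose K' := fun x x' y y' : T => D x x' y y' * adj e x y * (deg e x' + deg e y').
  have step3 : S4 Kf = S4 K' *+ 4.
    transitivity (S4 (fun x x' y y' => K' x x' y y' + K' x x' y' y + K' x' x y y' + K' x' x y' y)).
      apply: S4_ext => x x' y y'; rewrite /Kf /K' /D.
      rewrite (set2C x' x) (set2C y' y) (adj_sym es x' x) (adj_sym es y' y).
      case Ex: (e x x'); last by rewrite /adj Ex !mul0r.
      case Ey: (e y y'); last by rewrite /adj Ey !mul0r mulr0 !mul0r.
      rewrite Lexp; first (by ring); apply/eqP => E; [move: Ex | move: Ey]; by rewrite E ei.
    rewrite !S4_add.
    rewrite [S4 (fun a b c d => K' a b d c)]/S4 -swap34 -/(S4 K').
    rewrite [S4 (fun a b c d => K' b a c d)]/S4 -swap12 -/(S4 K').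
    rewrite [S4 (fun a b c d => K' b a d c)]/S4 -swap12 -swap34 -/(S4 K').
    by rewrite !mulrS mulr0n addr0 !addrA.
  have step4 : S4 K' = S4 K *+ 2.
    transitivity (S4 (fun x x' y y' => D x x' y y' * adj e x y * deg e x' + K x x' y y')).
      by apply: S4_ext => x x' y y'; rewrite /K' /K mulrDr.
    rewrite S4_add /S4 swapP -!/(S4 _) mulr2n; congr (_ + _).
    apply: S4_ext => a b c d; rewrite /K Dsym (adj_sym es c a) //.
  by rewrite step2 step3 step4 -mulrnA.
pose Rt := fun s t t' u : T => adj e s t * (adj e t t' * ((t' != s) : nat)%:Z) *
   (adj e s u * ((u != t) : nat)%:Z * deg e u).
have RHS : \sum_(A in edges e) Rsummand e A = S4 Rt.
  apply: (@pmulrnI _ 2) => //.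
  rewrite sumE2 //.
  transitivity (\sum_s \sum_t (adj e s t * fR e s t + adj e t s * fR e t s)).
    apply: eq_bigr => s _; apply: eq_bigr => t _.
    rewrite (adj_sym es t s); case Est: (e s t); last by rewrite /adj Est !mul0r addr0.
    rewrite Rexp ?mulrDr //; apply/eqP => E; move: Est; by rewrite E ei.
  rewrite (eq_bigr (fun s => \sum_t adj e s t * fR e s t + \sum_t adj e t s * fR e t s));
    last by move=> s _; rewrite big_split.
  rewrite big_split /= [X in _ + X = _]exchange_big /= -mulr2n; congr (_ *+ 2).
  apply: eq_bigr => s _; apply: eq_bigr => t _.
  case Est: (e s t); last first.
    rewrite /adj Est mul0r; symmetry; apply: big1 => t' _; apply: big1 => u _.
    by rewrite /Rt /adj Est !mul0r.
  have ets : e t s by rewrite es.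
  rewrite /fR (degm1 ets) (xim Est) mulr_suml mulr_sumr; apply: eq_bigr => t' _.
  rewrite mulr_sumr mulr_sumr; apply: eq_bigr => u _; rewrite /Rt; ring.
rewrite LHS RHS.
rewrite /S4 swapP rot234.
apply: eq_bigr => a _; apply: eq_bigr => b _; apply: eq_bigr => c _; apply: eq_bigr => d _.
rewrite /K /Rt /D disj2 (adj_sym es b a).
case Ebc: (e b c); last by rewrite /adj Ebc /= !(mul0r, mulr0).
case Ead: (e a d); last by rewrite /adj Ead /= !(mul0r, mulr0).
case Eab: (e a b); last by rewrite /adj Eab /= !(mul0r, mulr0).
have ba : b != a by apply/eqP => E; move: Eab; rewrite E ei.
have cd : c != d.
  apply/eqP => E; subst d; apply: (notri tr Eab Ebc); by rewrite es.
rewrite ba cd andbT /= !natZ_and (eq_sym b d) /adj Ebc Ead Eab; ring.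
Qed.
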